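(* Let $a>1$ be a real number and let $G$ be a connected $(n,m)$-graph. If $G$ has maximum value of $SEI_a$ among all connected $(n,m)$-graphs, then the maximum vertex degree in $G$ is $n-1$.
   Context: All graphs are finite, simple, undirected and connected; an $(n,m)$-graph has $n$ vertices and $m$ edges. The variable sum exdeg index is $SEI_a(G)=\sum_{uv\in E(G)}(a^{d_u}+a^{d_v})$, where $d_u$ is the degree of vertex $u$. *)

(* Defs.v *)
From mathcomp Require Import all_boot all_order all_algebra.
Set Implicit Arguments. Unset Strict Implicit. Unset Printing Implicit Defensive.
Import Order.TTheory GRing.Theory Num.Theory.

Definition simple_graph (n : nat) (e : rel 'I_n) : Prop :=
  symmetric e /\ irreflexive e.

Definition connected_graph (n : nat) (e : rel 'I_n) : Prop :=
  forall u v : 'I_n, connect e u v.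

(* edge set: unordered pairs {u,v} represented by (u,v) with u < v *)
Definition edges (n : nat) (e : rel 'I_n) : {set 'I_n * 'I_n} :=
  [set p : 'I_n * 'I_n | (p.1 < p.2)%N && e p.1 p.2].

Definition num_edges (n : nat) (e : rel 'I_n) : nat := #|edges e|.

Definition deg (n : nat) (e : rel 'I_n) (v : 'I_n) : nat :=
  #|[set w | e v w]|.

Definition max_deg (n : nat) (e : rel 'I_n) : nat :=
  \max_(v : 'I_n) deg e v.

Local Open Scope ring_scope.

Definition SEI (R : realFieldType) (a : R) (n : nat) (e : rel 'I_n) : R :=
  \sum_(p in edges e) (a ^+ deg e p.1 + a ^+ deg e p.2).

Definition connected_nm_graph (n m : nat) (e : rel 'I_n) : Prop :=
  simple_graph e /\ connected_graph e /\ num_edges e = m.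
Arguments connected_nm_graph n m e : clear implicits.

(* Main.v *)
Require Import Defs.
From mathcomp Require Import all_boot all_order all_algebra.
From mathcomp Require Import lra zify.
Import Order.TTheory GRing.Theory Num.Theory.
Local Open Scope ring_scope.
Lemma sum_edges (V : nmodType) n (e : rel 'I_n) (F : 'I_n -> V) : simple_graph e ->
  \sum_(p in edges e) (F p.1 + F p.2) = \sum_x F x *+ deg e x.
Proof.
case=> esym eirr.
have -> : \sum_x F x *+ deg e x = \sum_(p | e p.1 p.2) F p.1.
  rewrite -(pair_big_dep xpredT (fun x y => e x y) (fun x y => F x)).
  apply: eq_bigr => x _; rewrite /deg -sumr_const.
  by apply: eq_bigl => y; rewrite inE.
rewrite [RHS](bigID (fun p : 'I_n * 'I_n => (p.1 < p.2)%N)) /= big_split /=.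
congr (_ + _).
  by apply: eq_bigl => p; rewrite /edges inE andbC.
have hinj : injective (fun p : 'I_n * 'I_n => (p.2, p.1)) by case=> ? ? [? ?] [-> ->].
rewrite (reindex_inj hinj) /=.
apply: eq_bigl => -[x y] /=; rewrite /edges inE /= esym.
case: (ltngtP x y) => //=; rewrite ?andbF ?andbT //.
by move/val_inj ->; rewrite eirr.
Qed.
Lemma ineq (R : realFieldType) (a : R) (k d : nat) : 1 < a -> (k < d)%N ->
  (k.+1)%:R * a ^+ k.+1 - k%:R * a ^+ k < (d.+1)%:R * a ^+ d.+1 - d%:R * a ^+ d.
Proof.
move=> a1 kd.
have A0 : 0 < a ^+ k by apply: exprn_gt0; lra.
have AB : a ^+ k <= a ^+ d by apply: ler_weXn2l; [lra | exact: ltnW].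
have KD : k%:R + 1 <= d%:R :> R by rewrite natr1 ler_nat.
have K0 : 0 <= k%:R :> R by [].
rewrite !exprS -!natr1.
set A := a ^+ k in A0 AB *; set B := a ^+ d in AB *.
set K := k%:R in KD K0 *; set D := d%:R in KD *.
have D0 : 0 <= D by lra.
have h1 : 0 <= (B - A) * (D * (a - 1) + a) by apply: mulr_ge0; nra.
have h2 : 0 < A * ((D - K) * (a - 1)) by apply: mulr_gt0 => //; apply: mulr_gt0; lra.
nra.
Qed.

Lemma cross_edge n (e : rel 'I_n) (S : pred 'I_n) x y :
  connect e x y -> S x -> ~~ S y -> exists x' y', [/\ S x', ~~ S y' & e x' y'].
Proof.
move/connectP=> [p pth ->]; elim: p x pth => /= [|z p IH] x.
  by move=> _ Sx; rewrite Sx.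
move/andP=> [exz pz] Sx Sl; case Sz: (S z); first exact: (IH z pz Sz Sl).
by exists x, z; rewrite Sz.
Qed.

Lemma sum_change (R : realFieldType) n (df de : 'I_n -> nat) (H : nat -> R) v u :
  u != v -> (forall x, x != u -> x != v -> df x = de x) ->
  \sum_x H (df x) - \sum_x H (de x) = H (df v) + H (df u) - H (de v) - H (de u).
Proof.
move=> uv hx.
have e1 F : \sum_x F x = F v + F u + \sum_(x | (x != v) && (x != u)) F x :> R.
  by rewrite (bigD1 v) //= (bigD1 u) //= addrA.
rewrite e1 [X in _ - X]e1.
rewrite (eq_bigr (fun x => H (de x))); last first.
  by move=> i /andP[iv iu]; rewrite hx.
lra.
Qed.

Lemma SEI_deg (R : realFieldType) (a : R) n (g : rel 'I_n) : simple_graph g ->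
  SEI a g = \sum_x (deg g x)%:R * a ^+ deg g x.
Proof.
move=> sg; rewrite /SEI (@sum_edges _ _ _ (fun x => a ^+ deg g x)) //; apply: eq_bigr => x _; by rewrite mulr_natl.
Qed.

Lemma edges_deg (R : realFieldType) n (g : rel 'I_n) : simple_graph g ->
  ((num_edges g).*2)%:R = \sum_x (deg g x)%:R :> R.
Proof.
move=> sg; have := @sum_edges R _ _ (fun _ => 1) sg.
rewrite sumr_const -mulr2n -mulrnA mul2n => ->.
by apply: eq_bigr.
Qed.

Theorem corollary5 (R : realFieldType) (a : R) (n m : nat) (e : rel 'I_n) :
  1 < a ->
  connected_nm_graph n m e ->
  (forall f : rel 'I_n, connected_nm_graph n m f -> SEI a f <= SEI a e) ->
  max_deg e = (n - 1)%N.
Proof.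
move=> a1 [sg [cn ne]] hmax.
case: n e sg cn ne hmax => [|n] e sg cn ne hmax; first by rewrite /max_deg big_ord0.
have [esym eirr] := sg.
have hpos : (0 < #|'I_n.+1|)%N by rewrite card_ord.
have [v Hv] := @bigop.eq_bigmax _ (deg e) hpos.
have degle x : (deg e x <= n)%N.
  rewrite -[n]/(n.+1.-1) -[X in (_ <= X.-1)%N](card_ord n.+1) -(cardsC1 x).
  apply: subset_leq_card; apply/subsetP => y; rewrite !inE.
  by apply: contraL => /eqP ->; rewrite eirr.
have vmax x : (deg e x <= deg e v)%N by rewrite -Hv; exact: leq_bigmax.
rewrite /max_deg Hv subn1 /=; apply/eqP; rewrite eqn_leq degle /= leqNgt; apply/negP => hlt.
have [w0 /andP[w0v nvw0]] : exists w0, (w0 != v) && ~~ e v w0.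
  apply/existsP; apply: contraLR hlt; rewrite negb_exists => /forallP hall.
  rewrite -leqNgt -[n]/(n.+1.-1) -[X in (X.-1 <= _)%N](card_ord n.+1) -(cardsC1 v).
  apply: subset_leq_card; apply/subsetP => y; rewrite !inE => yv.
  by have := hall y; rewrite yv /= negbK.
have S1 : (fun x => (x == v) || e v x) v by rewrite /= eqxx.
have S2 : ~~ (fun x => (x == v) || e v x) w0 by rewrite /= negb_or w0v.
have [u [w [Su Sw euw]]] := @cross_edge _ e (fun x => (x == v) || e v x) v w0 (cn v w0) S1 S2.
move: Sw; rewrite negb_or => /andP[wv nevw].
have evu : e v u.
  case/orP: Su => // /eqP uv; by rewrite -uv euw in nevw.
have uv : u != v by apply: contraL evu => /eqP ->; rewrite eirr.
have uw : u != w by apply: contraL euw => /eqP ->; rewrite eirr.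
pose pr (x y a b : 'I_n.+1) := ((x == a) && (y == b)) || ((x == b) && (y == a)).
pose f x y := (e x y && ~~ pr x y u w) || pr x y v w.
have fsym : symmetric f.
  move=> x y; rewrite /f /pr esym.
  by case: (x == u) (y == w) (x == w) (y == u) (x == v) (y == v) => [] [] [] [] [] [].
have firr : irreflexive f.
  move=> x; rewrite /f eirr /=; apply/negP; rewrite /pr.
  by case/orP => /andP[/eqP-> /eqP hw]; move: wv; rewrite ?hw eqxx.
have fsg : simple_graph f by [].
have fcn : connected_graph f.
  have cs := sym_connect_sym fsym.
  have fuv : connect f u v.
    apply: connect1; rewrite /f /pr esym evu eqxx (negbTE uw) eq_sym (negbTE wv).
    by rewrite andbF.
  have fvw : connect f v w by apply: connect1; rewrite /f /pr !eqxx orbT.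
  have fuw : connect f u w := connect_trans fuv fvw.
  move=> x y; apply: (connect_sub _ (cn x y)) => {}x {}y exy.
  case hp: (pr x y u w); last by apply: connect1; rewrite /f exy hp.
  case/orP: hp => /andP[/eqP -> /eqP ->] //; by rewrite cs.
have dv : deg f v = (deg e v).+1.
  rewrite /deg; have -> : [set y | f v y] = w |: [set y | e v y].
    apply/setP => y; rewrite !inE /f /pr eqxx (eq_sym v u) (negbTE uv) (eq_sym v w) (negbTE wv) /=.
    by rewrite andbT orbF orbC.
  by rewrite cardsU1 inE nevw.
have du : deg e u = (deg f u).+1.
  rewrite /deg; have -> : [set y | f u y] = [set y | e u y] :\ w.
    apply/setP => y; rewrite !inE /f /pr eqxx (negbTE uv) (negbTE uw) /=.
    by rewrite !orbF andbC.
  by rewrite (cardsD1 w [set y | e u y]) inE euw.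
have dw : deg f w = deg e w.
  rewrite /deg; have -> : [set y | f w y] = v |: ([set y | e w y] :\ u).
    apply/setP => y; rewrite !inE /f /pr eqxx (eq_sym w u) (negbTE uw) (negbTE wv) /=.
    by rewrite orbC andbC.
  rewrite cardsU1 !inE esym (negbTE nevw) andbF /=.
  by rewrite (cardsD1 u [set y | e w y]) inE esym euw.
have dother x : x != u -> x != v -> deg f x = deg e x.
  move=> xu xv; case xw: (x == w); first by rewrite (eqP xw) dw.
  rewrite /deg; congr #|pred_of_set _|; apply/setP => y.
  by rewrite !inE /f /pr (negbTE xu) (negbTE xv) xw /= andbT orbF.
have nf : num_edges f = m.
  have hs := @sum_change R _ (deg f) (deg e) (fun k => k%:R) v u uv dother.
  rewrite /= dv du -!natr1 in hs.
  have h1 := @edges_deg R _ f fsg; have h2 := @edges_deg R _ e sg.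
  have : ((num_edges f).*2)%:R = ((num_edges e).*2)%:R :> R by rewrite h1 h2; lra.
  move/eqP; rewrite eqr_nat => /eqP; lia.
have hle := hmax f (conj fsg (conj fcn nf)).
rewrite (@SEI_deg R a _ f fsg) (@SEI_deg R a _ e sg) in hle.
have hs := @sum_change R _ (deg f) (deg e) (fun k => k%:R * a ^+ k) v u uv dother.
rewrite /= dv du in hs.
have kd : (deg f u < deg e v)%N by rewrite -du vmax.
have := @ineq R a _ _ a1 kd.
lra.
Qed.
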